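(* Let $k$ be a field of characteristic $0$ and let $d_1,\dots,d_n$ be positive integers with $t=\sum_{i=1}^n(d_i-1)$ odd. Let $X\subset\mathbb{P}^{n-1}(k)$ be the set of points represented by $(a_1,\dots,a_{n-1},1)$ with $a_i\in\{(d_i-1)-2j\mid 0\le j\le d_i-1\}$ for $1\le i\le n-1$ and such that $1+\sum_{i=1}^{n-1}a_i\in\{(d_n-1)-2j\mid 0\le j\le d_n-1\}$. Then $$|X|=\big[T^{\frac{t-1}{2}}\big]\frac{\prod_{i=1}^n(1-T^{d_i})}{(1-T)^n}.$$
   Context: For a power series $f$, $[T^a]f$ denotes the coefficient of $T^a$ in $f$. *)

(* Defs.v *)
From HB Require Import structures.
From mathcomp Require Import all_boot all_order all_algebra.
Set Implicit Arguments. Unset Strict Implicit. Unset Printing Implicit Defensive.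
Import Order.TTheory GRing.Theory Num.Theory.
Local Open Scope ring_scope.

Definition valset (d : nat) : seq int :=
  [seq ((d%:Z - 1) - 2 * j%:Z) | j <- iota 0 d].

Definition tdeg (n : nat) (d : nat -> nat) : nat :=
  (\sum_(1 <= i < n.+1) (d i).-1)%N.

(* v : 'rV[k]_n (a vector of k^n, representative of a point of P^{n-1}(k))
   is of the form (a_1, ..., a_{n-1}, 1) with a_i in valset (d i) and
   1 + sum a_i in valset (d n). *)
Definition inX (k : fieldType) (n : nat) (d : nat -> nat) (v : 'rV[k]_n) : Prop :=
  exists a : nat -> int,
    (forall i, (1 <= i <= n.-1)%N -> a i \in valset (d i)) /\
    (1 + \sum_(1 <= i < n) a i) \in valset (d n) /\
    (forall j : 'I_n, v ord0 j = if (j < n.-1)%N then (a j.+1)%:~R else 1).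

(* Two representatives with last coordinate 1 define the same projective
   point iff they are equal, so points of X correspond bijectively to
   such vectors. *)
Definition projpt_eq (k : fieldType) (n : nat) (v w : 'rV[k]_n) : Prop :=
  exists c : k, c != 0 /\ w = c *: v.

(* [T^a] (f/g) for power series, g(0) = 1: the a-th coefficient of any
   polynomial h with h*g = f modulo T^(a+1). *)
Definition ps_coef_quot (f g : {poly int}) (a : nat) (c : int) : Prop :=
  exists h : {poly int},
    (forall i, (i <= a)%N -> (h * g - f)`_i = 0) /\ h`_a = c.

(* Main.v *)
Require Import Defs.
From HB Require Import structures.
From mathcomp Require Import all_boot all_order all_algebra.
From mathcomp Require Import zify.
Import Order.TTheory GRing.Theory Num.Theory.
Local Open Scope ring_scope.

Definition sumz (s : seq int) : int := \sum_(x <- s) x.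

Fixpoint tup (d : nat -> nat) (m : nat) : seq (seq int) :=
  if m is m'.+1 then [seq rcons s x | s <- tup d m', x <- valset (d m'.+1)]
  else [:: [::]].

Fixpoint cnt (d : nat -> nat) (m : nat) (c : int) : nat :=
  if m is m'.+1 then (\sum_(x <- valset (d m'.+1)) cnt d m' (c - x))%N
  else ((c == 0) : nat).

Definition Pm (d : nat -> nat) (m : nat) : {poly int} :=
  \prod_(1 <= i < m.+1) \sum_(k < d i) 'X^k.

Lemma sum_iota_ord (F : nat -> nat) (d : nat) :
  (\sum_(j <- iota 0 d) F j = \sum_(j < d) F j)%N.
Proof. have := @big_mkord nat 0%N addn d predT F. by rewrite /index_iota subn0. Qed.

Lemma valset_rev (d : nat) (F : int -> nat) :
  (\sum_(x <- valset d) F x = \sum_(x <- valset d) F (- x))%N.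
Proof.
rewrite /valset !big_map.
have E : iota 0 d = index_iota 0 d by rewrite /index_iota subn0.
rewrite [in RHS]E big_rev_mkord subn0 sum_iota_ord.
apply: eq_bigr => [[j hj]] _ /=; congr F.
lia.
Qed.

Lemma valset_uniq d : uniq (valset d).
Proof.
rewrite map_inj_uniq ?iota_uniq // => i j H; lia.
Qed.

Lemma valset_ge d x : x \in valset d -> - (d.-1)%:Z <= x.
Proof.
by move=> /mapP [j]; rewrite mem_iota => hj ->; lia.
Qed.

Lemma tdegS m d : tdeg m.+1 d = (tdeg m d + (d m.+1).-1)%N.
Proof. by rewrite /tdeg big_nat_recr. Qed.

Lemma cnt_small d m c : c < - (tdeg m d)%:Z -> cnt d m c = 0%N.
Proof.
elim: m c => [|m IH] c /=.
  rewrite /tdeg big_geq // => h; case: eqP => //; lia.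
rewrite tdegS => h.
rewrite big1_seq // => x /andP[_ /valset_ge hx]; apply: IH; lia.
Qed.

Lemma coefP d m j : (Pm d m)`_j = (cnt d m (2 * j%:Z - (tdeg m d)%:Z))%:Z.
Proof.
elim: m j => [|m IH] j.
  rewrite /Pm /tdeg !big_geq //= coef1; case: j => //= j.
rewrite /Pm big_nat_recr //= -/(Pm d m) mulr_sumr coef_sum.
rewrite valset_rev /valset big_map sum_iota_ord.
rewrite (big_morph Posz PoszD (erefl 0%:Z)).
apply: eq_bigr => [[k hk]] _ /=.
rewrite coefMXn IH tdegS.
case: ltnP => hjk.
  rewrite cnt_small //; lia.
congr (Posz (cnt _ _ _)); lia.
Qed.
Lemma count_as_sum (T : Type) (a : pred T) (r : seq T) :
  count a r = (\sum_(x <- r) (a x : nat))%N.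
Proof. by elim: r => [|x r IH]; rewrite ?big_nil ?big_cons //= IH. Qed.

Lemma sumz_rcons s x : sumz (rcons s x) = sumz s + x.
Proof. by rewrite /sumz -cats1 big_cat big_seq1. Qed.

Lemma count_tup d m c :
  count (fun s => sumz s == c) (tup d m) = cnt d m c.
Proof.
elim: m c => [|m IH] c /=.
  by rewrite addn0 /sumz big_nil eq_sym.
rewrite count_flatten sumnE [in LHS]big_map [in LHS]big_map.
under [RHS]eq_bigr => x _ do rewrite -IH count_as_sum.
rewrite exchange_big /=. apply eq_bigr => s _.
rewrite count_map count_as_sum; apply: eq_bigr => x _ /=.
rewrite sumz_rcons; congr nat_of_bool; apply/eqP/eqP => H; lia.
Qed.

Lemma mem_tup d m s :
  (s \in tup d m) =
  (size s == m) && all (fun i => nth 0 s i \in valset (d i.+1)) (iota 0 m).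
Proof.
elim: m s => [|m IH] s.
  by case: s.
case/lastP: s => [|s x].
  apply/negbTE/allpairsP => -[[s' x'] [_ _ /=]] /(congr1 size).
  by rewrite size_rcons.
have -> : (rcons s x \in tup d m.+1) = (s \in tup d m) && (x \in valset (d m.+1)).
  apply/allpairsP/andP => [[[s' x'] [/= H1 H2 /rcons_inj [-> ->]]] | [H1 H2]] //.
  by exists (s, x).
rewrite IH size_rcons eqSS -addn1 iotaD all_cat /= add0n andbT.
case: eqP => //= hs.
rewrite nth_rcons hs ltnn eqxx addn1; congr andb.
apply: eq_in_all => i; rewrite mem_iota => /andP[_ hi].
by rewrite nth_rcons hs hi.
Qed.

Lemma uniq_tup d m : uniq (tup d m).
Proof.
elim: m => [|m IH] //=.
apply: allpairs_uniq => //; first exact: valset_uniq.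
by move=> [s1 x1] [s2 x2] _ _ /= /rcons_inj.
Qed.

Lemma count_inV d m (V : seq int) : uniq V ->
  count (fun s => (1 + sumz s) \in V) (tup d m) =
  (\sum_(x <- V) count (fun s => sumz s == (x - 1)%R) (tup d m))%N.
Proof.
move=> uV.
under [RHS]eq_bigr => x _ do rewrite count_as_sum.
rewrite exchange_big count_as_sum /=; apply: eq_bigr => s _.
rewrite -count_as_sum -(count_uniq_mem (1 + sumz s) uV).
apply: eq_count => x /=; apply/eqP/eqP => H; lia.
Qed.
Lemma intr_inj0 (k : fieldType) : [pchar k] =i pred0 ->
  forall z : int, (z%:~R : k) = 0 -> z = 0.
Proof.
move=> /pcharf0P ch [n|n] /eqP H.
  by move: H; rewrite -pmulrn ch => /eqP ->.
by move: H; rewrite NegzE mulrNz oppr_eq0 -pmulrn ch.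
Qed.

Theorem mainTheorem8 (k : fieldType) (n : nat) (d : nat -> nat) :
  [pchar k] =i pred0 ->
  (forall i, (1 <= i <= n)%N -> (0 < d i)%N) ->
  odd (tdeg n d) ->
  exists X : seq 'rV[k]_n,
    (* X lists each point of the set exactly once (as its representative
       with last coordinate 1) *)
    (forall v, v \in X <-> inX d v) /\
    (forall v w, v \in X -> w \in X -> projpt_eq v w -> v = w) /\
    uniq X /\
    ps_coef_quot (\prod_(1 <= i < n.+1) (1 - 'X^(d i)))
                 ((1 - 'X) ^+ n) ((tdeg n d).-1./2) (size X)%:Z.
Proof.
move=> ch0 _; case: n => [|N].
  by rewrite /tdeg big_geq.
move=> odd_t.
pose vec (s : seq int) : 'rV[k]_N.+1 :=
  \row_(j < N.+1) (if (j < N)%N then ((nth 0 s j)%:~R : k) else 1).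
have vec_last s : vec s ord0 ord_max = 1 by rewrite mxE /= ltnn.
exists [seq vec s | s <- tup d N & (1 + sumz s) \in valset (d N.+1)].
split.
  move=> v; split.
    move=> /mapP [s]; rewrite mem_filter => /andP[hQ] /[dup] hs.
    rewrite mem_tup => /andP[/eqP hsz hall] ->.
    exists (fun i => nth 0 s i.-1); split.
      case=> [|i] // /andP[_ hi] /=.
      by have := allP hall i; rewrite mem_iota; apply; lia.
    split.
      have -> : \sum_(1 <= i < N.+1) nth 0 s i.-1 = sumz s.
        by rewrite big_add1 /= /sumz [in RHS](big_nth 0) hsz.
      exact: hQ.
    by move=> j; rewrite mxE.
  move=> [a [ha [hsum hv]]].
  apply/mapP; exists [seq a i.+1 | i <- iota 0 N].
    rewrite mem_filter; apply/andP; split.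
      have -> : sumz [seq a i.+1 | i <- iota 0 N] = \sum_(1 <= i < N.+1) a i.
        by rewrite /sumz big_map big_add1 /= /index_iota subn0.
      exact: hsum.
    rewrite mem_tup size_map size_iota eqxx /=.
    apply/allP => i; rewrite mem_iota => hi.
    rewrite (nth_map 0) ?size_iota; last by lia.
    rewrite nth_iota; last by lia.
    apply: ha; lia.
  apply/rowP => j; rewrite hv mxE; case: ifP => // hj.
  rewrite (nth_map 0) ?size_iota // nth_iota //.
split.
  move=> v w /mapP[s _ ->] /mapP[s' _ ->] [c [hc E]].
  have := congr1 (fun M : 'rV[k]_N.+1 => M ord0 ord_max) E.
  rewrite /= !mxE /= ltnn mulr1 => hc1.
  by rewrite E -hc1 scale1r.
split.
  rewrite map_inj_in_uniq ?filter_uniq ?uniq_tup //.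
  move=> s s'; rewrite !mem_filter => /andP[_] /[!mem_tup] /andP[/eqP hs _].
  move=> /andP[_] /andP[/eqP hs' _] E.
  apply: (@eq_from_nth _ 0) => [|i hi]; first by rewrite hs hs'.
  have := congr1 (fun M : 'rV[k]_N.+1 => M ord0 (inord i)) E.
  rewrite !mxE inordK; last by rewrite hs in hi; lia.
  have -> : (i < N)%N by rewrite hs in hi.
  move=> /eqP; rewrite -subr_eq0 -intrB => /eqP /(@intr_inj0 k ch0 _) /eqP.
  by rewrite subr_eq0 => /eqP.
exists (Pm d N.+1); split.
  move=> i _.
  have geo m : (1 - 'X^m : {poly int}) = (1 - 'X) * \sum_(j < m) 'X^j.
    rewrite -{1}(expr1n _ m) subrXX; congr (_ * _); apply: eq_bigr => j _.
    by rewrite expr1n mul1r.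
  have -> : Pm d N.+1 * (1 - 'X) ^+ N.+1 = \prod_(1 <= i < N.+2) (1 - 'X^(d i)).
    rewrite (eq_bigr _ (fun i _ => geo (d i))) big_split /= prodr_const_nat.
    by rewrite subn1 /= mulrC.
  by rewrite subrr coef0.
rewrite coefP size_map size_filter; congr Posz.
set t := tdeg N.+1 d.
have ht : t = (t./2).*2.+1 by rewrite -{1}(odd_double_half t) odd_t.
have -> : (2 * (t.-1./2)%:Z - t%:Z) = -1.
  rewrite {1}ht /= doubleK {2}ht -muln2; lia.
rewrite count_inV ?valset_uniq //= valset_rev.
apply: eq_bigr => x _; rewrite count_tup; congr cnt; lia.
Qed.
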